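(* Let $(\mathcal{V},\mathcal{I})$ be a finite connected graph with vertex set $\mathcal{V}$ and set of unoriented edges $\mathcal{I}$ (each pair of vertices joined by at most one edge), with $N$ edges, each edge $(i,j)\in\mathcal{I}$ having a length $L_{ij}>0$. Let $(S_i)_{i\in\mathcal{V}}$ be given with $\sum_{i\in\mathcal{V}} S_i=0$. Let $0<\gamma<1$ and $f_\gamma(s):=(\gamma+1)|s|^{\frac{2\gamma}{\gamma+1}}$. For fluxes $Q=(Q_{ij})$, with the convention $Q_{ij}=-Q_{ji}$, define $$F[Q]=\sum_{(i,j)\in\mathcal{I},\, i<j} f_\gamma(Q_{ij})\,L_{ij}.$$ Let $Q\in\mathbb{R}^N$ be a global minimizer of $F$ subject to the local mass conservation constraint $$\sum_{j\in N(i)} Q_{ij}=S_i\quad\text{for all } i\in\mathcal{V},$$ where $N(i)$ is the set of neighbours of $i$. Then $Q$ contains no loops, i.e., there exists no closed circle of edges $\{(i_1,i_2),(i_2,i_3),\dots,(i_K,i_1)\}\subset\mathcal{I}$ such that the fluxes $Q_{i_1i_2},Q_{i_2i_3},\dots,Q_{i_Ki_1}$ are all nonzero.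
   Context: Vertices are indexed by integers; the sum over $i<j$ counts each unoriented edge once. $Q_{ij}>0$ means net flow from vertex $i$ to vertex $j$. $F[Q]$ equals $\inf_{C\in\mathbb{R}^N_+}\sum_{i<j}\big(Q_{ij}^2/C_{ij}+\frac{1}{\gamma}C_{ij}^\gamma\big)L_{ij}$ (metabolic coefficient $\nu=1$). *)

(* Defs.v *)
From HB Require Import structures.
From mathcomp Require Import all_boot all_order all_algebra.
From mathcomp Require Import all_classical all_reals all_analysis.
Set Implicit Arguments. Unset Strict Implicit. Unset Printing Implicit Defensive.
Import Order.TTheory GRing.Theory Num.Theory.
Local Open Scope ring_scope.

(* Vertices are 'I_n; the graph is an irreflexive symmetric relation [e]. *)

(* f_gamma(s) = (gamma+1) |s|^(2 gamma/(gamma+1)); powR gives 0 `^ p = 0 for p > 0. *)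
Definition f_gamma {R : realType} (gamma s : R) : R :=
  (gamma + 1) * (`|s| `^ (2 * gamma / (gamma + 1))).

(* Fluxes: Q i j = - Q j i (only values on edges matter). *)
Definition antisym_flux {R : realType} {n : nat} (Q : 'I_n -> 'I_n -> R) : Prop :=
  forall i j, Q i j = - Q j i.

Definition energy {R : realType} {n : nat} (e : rel 'I_n) (L : 'I_n -> 'I_n -> R)
  (gamma : R) (Q : 'I_n -> 'I_n -> R) : R :=
  \sum_(i < n) \sum_(j < n | (i < j)%N && e i j) f_gamma gamma (Q i j) * L i j.

Definition mass_conservation {R : realType} {n : nat} (e : rel 'I_n)
  (S : 'I_n -> R) (Q : 'I_n -> 'I_n -> R) : Prop :=
  forall i, \sum_(j < n | e i j) Q i j = S i.

Definition global_minimizer {R : realType} {n : nat} (e : rel 'I_n)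
  (L : 'I_n -> 'I_n -> R) (S : 'I_n -> R) (gamma : R) (Q : 'I_n -> 'I_n -> R) : Prop :=
  [/\ antisym_flux Q, mass_conservation e S Q &
      forall Q', antisym_flux Q' -> mass_conservation e S Q' ->
        energy e L gamma Q <= energy e L gamma Q'].

Definition has_loop {R : realType} {n : nat} (e : rel 'I_n)
  (Q : 'I_n -> 'I_n -> R) : Prop :=
  exists s : seq 'I_n, [/\ uniq s, (3 <= size s)%N &
    cycle (fun a b => e a b && (Q a b != 0)) s].

(* Main.v *)
Require Import Defs.
From HB Require Import structures.
From mathcomp Require Import all_boot all_order all_algebra.
From mathcomp Require Import all_classical all_reals all_analysis.
From mathcomp Require Import lra ring.
Import Order.TTheory GRing.Theory Num.Theory.
Local Open Scope ring_scope.
Section Ana.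
Variable R : realType.

Lemma bern (p x : R) : 0 < p < 1 -> 0 <= x -> x `^ p <= p * x + (1 - p).
Proof.
move=> /andP[p0 p1] x0.
have q0 : 0 < 1 - p by rewrite subr_gt0.
have := @conjugate_powR R (x `^ p) 1 p^-1 (1 - p)^-1 (powR_ge0 _ _) ler01
  ltac:(by rewrite invr_gt0) ltac:(by rewrite invr_gt0).
have pn0 : p != 0 by rewrite gt_eqF.
rewrite !invrK powR1 -powRrM (mulfV pn0) powRr1 // => H.
rewrite mulr1 mul1r mulrC in H.
by apply: H; rewrite addrC subrK.
Qed.

Lemma core (p A v : R) : 0 < p < 1 -> 0 <= v <= A ->
  (A + v) `^ p + (A - v) `^ p <= 2 * A `^ p.
Proof.
move=> hp /andP[v0 vA].
have [A0|A0] := eqVneq A 0.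
  have v00 : v = 0 by apply/le_anti; rewrite v0 -A0 vA.
  by rewrite A0 v00 subr0 addr0 mulr2n mulrDl mul1r.
have Ap : 0 < A by rewrite lt_neqAle eq_sym A0 (le_trans v0 vA).
set w := v / A.
have w0 : 0 <= w by rewrite divr_ge0 // ltW.
have w1 : w <= 1 by rewrite ler_pdivrMr // mul1r.
have -> : A + v = A * (1 + w) by rewrite /w mulrDr mulr1 mulrCA divff ?mulr1.
have -> : A - v = A * (1 - w) by rewrite /w mulrBr mulr1 mulrCA divff ?mulr1.
have w1' : 0 <= 1 - w by rewrite subr_ge0.
rewrite (powRM _ (ltW Ap) (addr_ge0 ler01 w0)) (powRM _ (ltW Ap) w1').
have := @bern p (1 + w) hp (addr_ge0 ler01 w0); have := @bern p (1 - w) hp w1'.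
have := powR_ge0 A p.
move: (A `^ p) ((1 + w) `^ p) ((1 - w) `^ p) => a b c a0 hc hb.
have : b + c <= 2 by move: hp => /andP[? ?]; lra.
move=> bc; rewrite -mulrDr; rewrite mulrC ler_wpM2r //.
Qed.

Lemma two_pow_lt (p : R) : 0 < p < 1 -> 2 `^ p < 2.
Proof.
move=> /andP[p0 p1].
have hle : 2 `^ p <= (2:R) by apply: ler1_powR; [rewrite ler1n | exact: ltW].
rewrite lt_neqAle hle andbT.
apply/negP => /eqP h.
have := ln_powR 2 p; rewrite h => /eqP.
have l2 : 0 < ln (2 : R) by rewrite ln_gt0 // ltr1n.
rewrite -subr_eq0 -{1}(mul1r (ln 2)) -mulrBl mulf_eq0 (gt_eqF l2) orbF subr_eq0.
by move/eqP => p1'; move: p1; rewrite -p1' ltxx.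
Qed.
End Ana.
Section Term.
Variable R : realType.

Lemma norm_swap (p a u : R) : `|u| <= `|a| ->
  `|a + u| `^ p + `|a - u| `^ p = (`|a| + `|u|) `^ p + (`|a| - `|u|) `^ p.
Proof.
have [a0|a0] := leP 0 a; have [u0|u0] := leP 0 u.
- rewrite (ger0_norm a0) (ger0_norm u0) => h.
  by rewrite (ger0_norm (_ : 0 <= a + u)) ?(ger0_norm (_ : 0 <= a - u)) //; lra.
- rewrite (ger0_norm a0) (ltr0_norm u0) => h.
  rewrite (ger0_norm (_ : 0 <= a + u)) ?(ger0_norm (_ : 0 <= a - u)); try lra.
  by rewrite addrC opprK.
- rewrite (ltr0_norm a0) (ger0_norm u0) => h.
  rewrite (ler0_norm (_ : a + u <= 0)) ?(ler0_norm (_ : a - u <= 0)); try lra.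
  by rewrite addrC; congr (_ `^ _ + _ `^ _); lra.
- rewrite (ltr0_norm a0) (ltr0_norm u0) => h.
  rewrite (ler0_norm (_ : a + u <= 0)) ?(ler0_norm (_ : a - u <= 0)); try lra.
  by congr (_ `^ _ + _ `^ _); lra.
Qed.

Lemma p_itv (g : R) : 0 < g < 1 -> 0 < 2 * g / (g + 1) < 1.
Proof.
move=> /andP[g0 g1]; have g1p : 0 < g + 1 by lra.
apply/andP; split; first by rewrite divr_gt0 // mulr_gt0.
rewrite ltr_pdivrMr // mul1r mulr_natl mulr2n ltrD2l; exact: g1.
Qed.

Lemma term (g a u : R) : 0 < g < 1 -> `|u| <= `|a| ->
  f_gamma g (a + u) + f_gamma g (a - u) <= 2 * f_gamma g a.
Proof.
move=> hg hu; rewrite /f_gamma -mulrDr mulrCA; apply: ler_wpM2l.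
  by move: hg => /andP[? ?]; lra.
rewrite norm_swap //; apply: core; first exact: p_itv.
by rewrite normr_ge0.
Qed.

Lemma term_strict (g a u : R) : 0 < g < 1 -> `|u| = `|a| -> a != 0 ->
  f_gamma g (a + u) + f_gamma g (a - u) < 2 * f_gamma g a.
Proof.
move=> hg hu a0; rewrite /f_gamma -mulrDr mulrCA ltr_pM2l; last first.
  by move: hg => /andP[? ?]; lra.
have hp := @p_itv g hg.
rewrite norm_swap ?hu // subrr powR0; last by move: hp => /andP[? ?]; rewrite gt_eqF.
have -> : `|a| + `|a| = 2 * `|a| by rewrite mulr_natl mulr2n.
rewrite addr0 powRM ?normr_ge0 //.
rewrite ltr_pM2r ?powR_gt0 ?normr_gt0 //; exact: two_pow_lt.
Qed.
End Term.

Lemma ex_min (R : realType) (T : eqType) (g : T -> R) (s : seq T) : s != [::] ->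
  exists2 x, x \in s & forall y, y \in s -> g x <= g y.
Proof.
elim: s => // a s IH _; case: (eqVneq s [::]) => [->|sn].
  exists a; first by rewrite inE eqxx.
  by move=> y; rewrite inE => /eqP ->; exact: lexx.
have [x xs xm] := IH sn; case: (leP (g a) (g x)) => h.
  exists a; first by rewrite inE eqxx.
  move=> y; rewrite inE => /orP[/eqP->|ys]; [exact: lexx | exact: le_trans h (xm _ ys)].
exists x; first by rewrite inE xs orbT.
by move=> y; rewrite inE => /orP[/eqP->|ys]; [exact: ltW | exact: xm].
Qed.

Lemma nn (T : eqType) (s : seq T) v : uniq s -> (2 < size s)%N -> v \in s ->
  next s (next s v) != v.
Proof.
move=> us ss vs; case: (rot_to vs) => i s' hr.
have h1 x : next s x = next (v :: s') x by rewrite -hr next_rot.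
rewrite !h1.
have : uniq (v :: s') by rewrite -hr rot_uniq.
have : (2 < size (v :: s'))%N by rewrite -hr size_rot.
case: s' {hr h1} => [|w [|u r]] //= _.
rewrite !inE eqxx /= => /and4P[/norP[vw /norP[vu _]] _ _ _].
by rewrite eq_sym in vw; rewrite (negbTE vw) eqxx eq_sym.
Qed.

Lemma sum_ind (R : realType) n (P : pred 'I_n) (k : 'I_n) :
  \sum_(j < n | P j) ((j == k)%:R : R) = (P k)%:R.
Proof.
rewrite big_mkcond /= (bigD1 k) //= eqxx big1 ?addr0; first by case: (P k).
by move=> j /negbTE ->; case: (P j).
Qed.

Lemma key_np (T : eqType) (s : seq T) i j : uniq s ->
  (j \in s) && (i == next s j) = (i \in s) && (j == prev s i).
Proof.
move=> us; apply/idP/idP.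
  by move=> /andP[js /eqP ->]; rewrite mem_next js prev_next // eqxx.
by move=> /andP[iS /eqP ->]; rewrite mem_prev iS next_prev // eqxx.
Qed.

Theorem lemma2p1 (R : realType) (n : nat) (e : rel 'I_n)
  (L : 'I_n -> 'I_n -> R) (S : 'I_n -> R) (gamma : R) (Q : 'I_n -> 'I_n -> R) :
  irreflexive e -> symmetric e -> (forall x y, connect e x y) ->
  (forall i j, e i j -> 0 < L i j) ->
  \sum_(i < n) S i = 0 ->
  0 < gamma < 1 ->
  global_minimizer e L S gamma Q ->
  ~ has_loop e Q.
Proof.
move=> irr sym _ Lpos _ hg [anti mass min] [s [us ss cyc]].
set nx := next s.
have cyc_e v : v \in s -> e v (nx v) && (Q v (nx v) != 0) by move=> vs; exact: next_cycle cyc vs.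
have s0 : s != [::] by case: s ss {us cyc cyc_e nx}.
have [v vs vmin] := @ex_min R _ (fun x => `|Q x (nx x)|) s s0.
set t := `|Q v (nx v)|.
have /andP[ev Qv] := cyc_e v vs.
have tpos : 0 < t by rewrite normr_gt0.
pose c := fun i j : 'I_n => (((i \in s) && (j == nx i))%:R - ((j \in s) && (i == nx j))%:R : R).
pose Qt := fun (r : R) i j => Q i j + r * c i j.
have antiQt r : antisym_flux (Qt r).
  by move=> i j; rewrite /Qt /c [Q i j]anti; ring.
have csum i : \sum_(j < n | e i j) c i j = 0.
  have h2 : \sum_(j < n | e i j) (((j \in s) && (i == nx j))%:R : R) =
     \sum_(j < n | e i j) ((i \in s) && (j == prev s i))%:R.
    by apply eq_bigr => j _; rewrite key_np.
  rewrite /c sumrB h2.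
  case hi : (i \in s) => /=.
    rewrite !sum_ind.
    have /andP[-> _] := cyc_e i hi.
    have /andP[h _] := prev_cycle cyc hi.
    by rewrite sym h subrr.
  by rewrite !big1 ?subrr.
have massQt r : mass_conservation e S (Qt r).
  by move=> i; rewrite /Qt big_split /= -mulr_sumr mass csum mulr0 addr0.
have Hle r : energy e L gamma Q <= energy e L gamma (Qt r) := min _ (antiQt r) (massQt r).
pose d i j := (2 * f_gamma gamma (Q i j) - f_gamma gamma (Qt t i j)
   - f_gamma gamma (Qt (-t) i j)) * L i j.
have Dsum : energy e L gamma Q + energy e L gamma Q - energy e L gamma (Qt t)
   - energy e L gamma (Qt (-t)) = \sum_(i < n) \sum_(j < n | (i < j)%N && e i j) d i j.
  rewrite /energy -big_split -!sumrB /=; apply eq_bigr => i _.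
  rewrite -big_split -!sumrB; apply eq_bigr => j _.
rewrite /d /=; ring.
have nt : `|t| = t by rewrite ger0_norm // ltW.
have hc i j : `|t * c i j| <= `|Q i j|.
  rewrite /c; case E1 : ((i \in s) && (j == nx i)); case E2 : ((j \in s) && (i == nx j));
    rewrite /= ?subrr ?subr0 ?sub0r ?mulr0 ?mulr1 ?mulrN1 ?normr0 ?normrN ?nt //.
  - by move/andP: E1 => [iS /eqP ->]; exact: vmin.
  - by move/andP: E2 => [jS /eqP ->]; rewrite anti normrN; exact: vmin.
have dge0 i j : e i j -> 0 <= d i j.
  move=> eij; rewrite /d mulr_ge0 // ?(ltW (Lpos _ _ eij)) //.
  have := @term R gamma (Q i j) (t * c i j) hg (hc i j).
  by rewrite /Qt mulNr; lra.
have dpos i j : e i j -> `|t * c i j| = `|Q i j| -> Q i j != 0 -> 0 < d i j.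
  move=> eij h1 h2; rewrite /d mulr_gt0 // ?(Lpos _ _ eij) //.
  have := @term_strict R gamma (Q i j) (t * c i j) hg h1 h2.
  by rewrite /Qt mulNr; lra.
set w := nx v.
have nw : (w \in s) && (v == nx w) = false.
  by rewrite /w /nx eq_sym (negbTE (@nn _ s v us ss vs)) andbF.
have cvw : c v w = 1 by rewrite /c nw vs eqxx /= subr0.
have cwv : c w v = -1 by rewrite /c nw vs eqxx /= sub0r.
have [x [y [xy exy dxy]]] : exists x y : 'I_n, [/\ (x < y)%N, e x y & 0 < d x y].
  case: (ltngtP v w) => h.
  - exists v, w; split => //; apply: dpos => //; by rewrite cvw mulr1 nt.
  - exists w, v; split => //; first by rewrite sym.
    apply: dpos; first by rewrite sym.
      by rewrite cwv mulrN1 normrN nt /t -/w anti normrN.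
    by rewrite anti oppr_eq0.
  - by move: ev; rewrite -/w (val_inj h) irr.
have : 0 < \sum_(i < n) \sum_(j < n | (i < j)%N && e i j) d i j.
  rewrite (bigD1 x) //= (bigD1 y) /=; last by rewrite xy exy.
  have s1 : 0 <= \sum_(j < n | ((x < j)%N && e x j) && (j != y)) d x j.
    by apply: sumr_ge0 => j /andP[/andP[_ ej] _]; exact: dge0.
  have s2 : 0 <= \sum_(i < n | i != x) \sum_(j < n | (i < j)%N && e i j) d i j.
    by apply: sumr_ge0 => i _; apply: sumr_ge0 => j /andP[_ ej]; exact: dge0.
  lra.
rewrite -Dsum; have := Hle t; have := Hle (-t); lra.
Qed.
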